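(* Let $I$ be a nonempty open real interval and let $(f,g)\in\mathscr{B}_0(I)$. Consider the statements: (i) There exists a continuous strictly monotone function $h:I\to\mathbb{R}$ such that \[ \Big(\frac{g}{f}\Big)^{-1}\!\left(\frac{g(x)+g(y)}{f(x)+f(y)}\right)=h^{-1}\Big(\frac{h(x)+h(y)}{2}\Big)\qquad\text{for all } x,y\in I. \tag{$*$} \] (ii) There exist real constants $\alpha,\beta,\gamma$ such that $\alpha f^2+\beta fg+\gamma g^2=1$ on $I$. (iii) (Applicable when $(f,g)\in\mathscr{B}_1(I)$.) Equation $( * )$ holds with $h$ being a primitive function of $W^{1,0}_{f,g}$. (iv) (Applicable when $(f,g)\in\mathscr{B}_2(I)$.) There exists a real constant $\delta$ such that $W^{2,1}_{f,g}=\delta\,(W^{1,0}_{f,g})^3$ on $I$. (v) (Applicable when $(f,g)\in\mathscr{B}_2(I)$.) $\Psi_{f,g}$ is differentiable and $\Psi'_{f,g}=2\Phi_{f,g}\Psi_{f,g}$ on $I$. Then (i) and (ii) are equivalent; if in addition $(f,g)\in\mathscr{B}_1(I)$, then (i), (ii), (iii) are equivalent; and if in addition $(f,g)\in\mathscr{B}_2(I)$, then (i)–(v) are all equivalent.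
   Context: $\mathscr{B}_0(I)$ is the class of pairs $(f,g)$ of functions $I\to\mathbb{R}$ such that $f$ is everywhere positive on $I$ and $g/f$ is strictly monotone and continuous on $I$. For $n\geq1$, $\mathscr{B}_n(I)$ is the class of pairs $(f,g)$ such that $f$ is everywhere positive on $I$, $f,g$ are $n$ times continuously differentiable on $I$, and $(g/f)'$ is nowhere zero on $I$. For such pairs and $i,j\in\{0,\dots,n\}$, $W^{i,j}_{f,g}:=f^{(i)}g^{(j)}-f^{(j)}g^{(i)}$ (the determinant with first row $f^{(i)},f^{(j)}$ and second row $g^{(i)},g^{(j)}$), and $\Phi_{f,g}:=W^{2,0}_{f,g}/W^{1,0}_{f,g}$, $\Psi_{f,g}:=-W^{2,1}_{f,g}/W^{1,0}_{f,g}$. *)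

(* Defs.v *)
From Stdlib Require Import Reals ClassicalEpsilon.
From Coquelicot Require Import Coquelicot.
Open Scope R_scope.

Definition oint (a b : Rbar) (x : R) : Prop :=
  Rbar_lt a x /\ Rbar_lt x b.

Definition strictly_increasing_on (I : R -> Prop) (p : R -> R) : Prop :=
  forall x y, I x -> I y -> x < y -> p x < p y.
Definition strictly_decreasing_on (I : R -> Prop) (p : R -> R) : Prop :=
  forall x y, I x -> I y -> x < y -> p y < p x.
Definition strictly_monotone_on (I : R -> Prop) (p : R -> R) : Prop :=
  strictly_increasing_on I p \/ strictly_decreasing_on I p.
Definition continuous_on_set (I : R -> Prop) (p : R -> R) : Prop :=
  forall x, I x -> continuous p x.

(* The inverse of p (restricted to I), evaluated at c: the (unique, when p is
   injective on I and c is in p(I)) point z of I with p z = c. *)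
Definition inv_on (I : R -> Prop) (p : R -> R) (c : R) : R :=
  epsilon (inhabits 0) (fun z => I z /\ p z = c).

Definition Cn_on (n : nat) (I : R -> Prop) (p : R -> R) : Prop :=
  (forall k, (k < n)%nat -> forall x, I x -> ex_derive (Derive_n p k) x) /\
  (forall k, (k <= n)%nat -> forall x, I x -> continuous (Derive_n p k) x).

Definition quot (f g : R -> R) : R -> R := fun t => g t / f t.

Definition B0 (I : R -> Prop) (f g : R -> R) : Prop :=
  (forall x, I x -> 0 < f x) /\
  strictly_monotone_on I (quot f g) /\ continuous_on_set I (quot f g).

Definition Bn (n : nat) (I : R -> Prop) (f g : R -> R) : Prop :=
  (forall x, I x -> 0 < f x) /\ Cn_on n I f /\ Cn_on n I g /\
  (forall x, I x -> Derive (quot f g) x <> 0).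

Definition W (i j : nat) (f g : R -> R) : R -> R :=
  fun t => Derive_n f i t * Derive_n g j t - Derive_n f j t * Derive_n g i t.

Definition Phi (f g : R -> R) : R -> R := fun t => W 2 0 f g t / W 1 0 f g t.
Definition Psi (f g : R -> R) : R -> R := fun t => - W 2 1 f g t / W 1 0 f g t.

Definition star_eq (I : R -> Prop) (f g h : R -> R) : Prop :=
  forall x y, I x -> I y ->
    inv_on I (quot f g) ((g x + g y) / (f x + f y)) =
    inv_on I h ((h x + h y) / 2).

Definition stmt_i (I : R -> Prop) (f g : R -> R) : Prop :=
  exists h : R -> R, continuous_on_set I h /\ strictly_monotone_on I h /\
    star_eq I f g h.

Definition stmt_ii (I : R -> Prop) (f g : R -> R) : Prop :=
  exists alpha beta gamma : R, forall x, I x ->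
    alpha * f x ^ 2 + beta * f x * g x + gamma * g x ^ 2 = 1.

Definition stmt_iii (I : R -> Prop) (f g : R -> R) : Prop :=
  exists h : R -> R, (forall x, I x -> is_derive h x (W 1 0 f g x)) /\
    star_eq I f g h.

Definition stmt_iv (I : R -> Prop) (f g : R -> R) : Prop :=
  exists delta : R, forall x, I x -> W 2 1 f g x = delta * (W 1 0 f g x) ^ 3.

Definition stmt_v (I : R -> Prop) (f g : R -> R) : Prop :=
  forall x, I x -> is_derive (Psi f g) x (2 * Phi f g x * Psi f g x).

(* Main.v *)
Require Import Defs.
From Stdlib Require Import Reals Lra Lia ClassicalEpsilon.
From Coquelicot Require Import Coquelicot.
Open Scope R_scope.

Lemma ballR (x e y : R) : ball x e y <-> Rabs (y - x) < e.
Proof. split; intro H; exact H. Qed.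

Lemma locR (x : R) (P : R -> Prop) :
  locally x P <-> exists e, 0 < e /\ forall y, Rabs (y - x) < e -> P y.
Proof.
  split.
  - intros [e He]. exists e. split; [apply cond_pos|]. intros y Hy. apply He. apply ballR. exact Hy.
  - intros [e [He H]]. exists (mkposreal e He). intros y Hy. apply H. apply ballR in Hy. exact Hy.
Qed.

Lemma contR (f : R -> R) x : continuous f x <->
  forall eps, 0 < eps -> exists d, 0 < d /\ forall y, Rabs (y - x) < d -> Rabs (f y - f x) < eps.
Proof.
  unfold continuous. rewrite filterlim_locally. split.
  - intros H eps He. destruct (proj1 (locR _ _) (H (mkposreal eps He))) as [d [Hd H2]].
    exists d. split; auto.
  - intros H eps. apply locR. destruct (H eps (cond_pos eps)) as [d [Hd H2]].
    exists d. split; auto.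
Qed.

Lemma cont_pt (f : R -> R) x : continuous f x -> continuity_pt f x.
Proof. intro H. apply continuity_pt_filterlim. exact H. Qed.

Lemma derive_cont (p : R -> R) t l : is_derive p t l -> continuous p t.
Proof. intro H. apply (ex_derive_continuous (K:=R_AbsRing) (V:=R_NormedModule)). exists l. exact H. Qed.

Definition conv (S : R -> Prop) := forall x y z, S x -> S y -> x <= z <= y -> S z.
Definition opn (S : R -> Prop) := forall x, S x -> exists e, 0 < e /\ forall y, Rabs (y - x) < e -> S y.

Lemma oint_conv a b : conv (oint a b).
Proof.
  intros x y z [H1 H2] [H3 H4] [H5 H6]. split.
  - destruct a; simpl in *; auto; lra.
  - destruct b; simpl in *; auto; lra.
Qed.

Lemma oint_opn a b : opn (oint a b).
Proof.
  intros x [H1 H2].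
  assert (E1 : exists e, 0 < e /\ forall y, Rabs (y - x) < e -> Rbar_lt a y).
  { destruct a as [a| |]; simpl in *.
    - exists (x - a). split; [lra|]. intros y Hy. apply Rabs_def2 in Hy. lra.
    - contradiction.
    - exists 1. split; [lra|]. auto. }
  assert (E2 : exists e, 0 < e /\ forall y, Rabs (y - x) < e -> Rbar_lt y b).
  { destruct b as [b| |]; simpl in *.
    - exists (b - x). split; [lra|]. intros y Hy. apply Rabs_def2 in Hy. lra.
    - exists 1. split; [lra|]. auto.
    - contradiction. }
  destruct E1 as [e1 [He1 F1]]. destruct E2 as [e2 [He2 F2]].
  exists (Rmin e1 e2). split. { apply Rmin_glb_lt; auto. }
  intros y Hy. split.
  - apply F1. eapply Rlt_le_trans; [exact Hy| apply Rmin_l].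
  - apply F2. eapply Rlt_le_trans; [exact Hy| apply Rmin_r].
Qed.

Lemma oint_ne a b : Rbar_lt a b -> exists x, oint a b x.
Proof.
  intro H. unfold oint.
  destruct a as [a| |]; destruct b as [b| |]; simpl in *; try contradiction.
  - exists ((a+b)/2). simpl. lra.
  - exists (a+1). simpl. lra.
  - exists (b-1). simpl. lra.
  - exists 0. simpl. auto.
Qed.

Lemma opn_two S x : opn S -> S x -> exists y, S y /\ y <> x.
Proof.
  intros Ho Hx. destruct (Ho x Hx) as [e [He H]]. exists (x + e/2). split.
  - apply H. replace (x + e/2 - x) with (e/2) by ring. rewrite Rabs_pos_eq; lra.
  - lra.
Qed.

Lemma ivt_S (S : R -> Prop) (p : R -> R) x y c :
  conv S -> (forall t, S t -> continuous p t) -> S x -> S y -> x <= y ->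
  (p x <= c <= p y \/ p y <= c <= p x) -> exists z, x <= z <= y /\ p z = c.
Proof.
  intros Hc Hp Hx Hy Hxy Hb.
  destruct (Req_dec (p x) c) as [E|E]. { exists x. split; [lra|auto]. }
  destruct (Req_dec (p y) c) as [E'|E']. { exists y. split; [lra|auto]. }
  destruct (Req_dec x y) as [Exy|Exy]. { subst. lra. }
  assert (Hct : forall t, x <= t <= y -> continuity_pt p t).
  { intros t Ht. apply cont_pt. apply Hp. apply (Hc x y t); auto. }
  destruct Hb as [Hb|Hb].
  - destruct (Ranalysis5.IVT_interv (fun t => p t - c) x y) as [z [Hz1 Hz2]].
    + intros t Ht. apply continuity_pt_minus; [apply Hct; auto| apply continuity_pt_const; intros u v; auto].
    + lra.
    + lra.
    + lra.
    + exists z. split; auto. lra.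
  - destruct (Ranalysis5.IVT_interv (fun t => c - p t) x y) as [z [Hz1 Hz2]].
    + intros t Ht. apply continuity_pt_minus; [apply continuity_pt_const; intros u v; auto|apply Hct; auto].
    + lra.
    + lra.
    + lra.
    + exists z. split; auto. lra.
Qed.

Lemma const_S (S : R -> Prop) (p : R -> R) x y :
  conv S -> (forall t, S t -> is_derive p t 0) -> S x -> S y -> p x = p y.
Proof.
  intros Hc Hd Hx Hy.
  assert (Hin : forall t, Rmin x y <= t <= Rmax x y -> S t).
  { intros t Ht. unfold Rmin, Rmax in Ht. destruct (Rle_dec x y).
    - apply (Hc x y t); auto.
    - apply (Hc y x t); auto. }
  destruct (MVT_gen p x y (fun _ => 0)) as [c [Hc1 Hc2]].
  - intros t Ht. apply Hd. apply Hin. lra.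
  - intros t Ht. apply cont_pt. apply (derive_cont _ _ 0). apply Hd. apply Hin. auto.
  - lra.
Qed.

Lemma incr_S (S : R -> Prop) (p d : R -> R) x y :
  conv S -> (forall t, S t -> is_derive p t (d t)) -> (forall t, S t -> 0 < d t) ->
  S x -> S y -> x < y -> p x < p y.
Proof.
  intros Hc Hd Hpos Hx Hy Hxy.
  assert (Hin : forall t, Rmin x y <= t <= Rmax x y -> S t).
  { intros t Ht. rewrite Rmin_left in Ht by lra. rewrite Rmax_right in Ht by lra.
    apply (Hc x y t); auto. }
  destruct (MVT_gen p x y d) as [c [Hc1 Hc2]].
  - intros t Ht. apply Hd. apply Hin. lra.
  - intros t Ht. apply cont_pt. apply (derive_cont _ _ (d t)). apply Hd. apply Hin. auto.
  - assert (0 < d c) by (apply Hpos; apply Hin; auto).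
    assert (0 < d c * (y - x)) by (apply Rmult_lt_0_compat; lra). lra.
Qed.

Definition injS (S : R -> Prop) (p : R -> R) := forall x y, S x -> S y -> p x = p y -> x = y.

Lemma sm_inj S p : strictly_monotone_on S p -> injS S p.
Proof.
  intros [H|H] x y Hx Hy E; destruct (Rtotal_order x y) as [L|[L|L]]; auto;
  [ specialize (H x y Hx Hy L) | specialize (H y x Hy Hx L)
  | specialize (H x y Hx Hy L) | specialize (H y x Hy Hx L)]; lra.
Qed.

Lemma inv_on_spec S p c : (exists z, S z /\ p z = c) -> S (inv_on S p c) /\ p (inv_on S p c) = c.
Proof. intro H. unfold inv_on. apply (epsilon_spec (inhabits 0) (fun z => S z /\ p z = c)). exact H. Qed.

Lemma inv_on_eq S p z : injS S p -> S z -> inv_on S p (p z) = z.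
Proof.
  intros Hi Hz. destruct (inv_on_spec S p (p z)) as [H1 H2]. { exists z; auto. }
  apply Hi; auto.
Qed.

Lemma wmean A B u v : 0 < A -> 0 < B ->
  (u <= (A*u + B*v)/(A+B) <= v) \/ (v <= (A*u + B*v)/(A+B) <= u).
Proof.
  intros HA HB.
  assert (E1 : (A*u + B*v)/(A+B) - u = B*(v-u)/(A+B)) by (field; lra).
  assert (E2 : v - (A*u + B*v)/(A+B) = A*(v-u)/(A+B)) by (field; lra).
  destruct (Rle_dec u v).
  - left. split.
    + assert (0 <= B*(v-u)/(A+B)). { apply Rmult_le_pos; [apply Rmult_le_pos; lra|]. left; apply Rinv_0_lt_compat; lra. } lra.
    + assert (0 <= A*(v-u)/(A+B)). { apply Rmult_le_pos; [apply Rmult_le_pos; lra|]. left; apply Rinv_0_lt_compat; lra. } lra.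
  - right. split.
    + assert (A*(v-u)/(A+B) <= 0). { unfold Rdiv. rewrite Rmult_assoc. apply Rmult_le_0_l; [lra|]. apply Rmult_le_0_r; [lra|]. left; apply Rinv_0_lt_compat; lra. } lra.
    + assert (B*(v-u)/(A+B) <= 0). { unfold Rdiv. rewrite Rmult_assoc. apply Rmult_le_0_l; [lra|]. apply Rmult_le_0_r; [lra|]. left; apply Rinv_0_lt_compat; lra. } lra.
Qed.

Lemma is_derive_eq (p : R -> R) x l l' : is_derive p x l -> l = l' -> is_derive p x l'.
Proof. intros H E. subst. exact H. Qed.

Lemma star_of S f g h : injS S (quot f g) -> injS S h ->
  (forall x y, S x -> S y -> exists z, S z /\ quot f g z = (g x + g y)/(f x + f y) /\
      h z = (h x + h y)/2) ->
  star_eq S f g h.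
Proof.
  intros Hq Hh H x y Hx Hy. destruct (H x y Hx Hy) as [z [Hz [E1 E2]]].
  rewrite <- E1, <- E2. rewrite !inv_on_eq; auto.
Qed.

Lemma key_alg al be ga A b b' u t :
  let P := fun s => al + be * s + ga * s ^ 2 in
  0 < A -> 0 < b -> A ^ 2 * P u = 1 -> b ^ 2 * P t = 1 ->
  b' = - (be + 2 * ga * t) * b ^ 3 / 2 ->
  0 < P ((A * u + b * t) / (A + b)) ->
  ((b' * t + b) * (A + b) - (A * u + b * t) * b') / (A + b) ^ 2
     * / P ((A * u + b * t) / (A + b)) = / P t / 2.
Proof.
  intros P HA Hb HPu HPt Hb' HPm.
  set (m := (A * u + b * t) / (A + b)).
  set (bt := al + be * (u + t) / 2 + ga * u * t).
  assert (HAb : A + b <> 0) by lra.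
  assert (E1 : P m * (A + b) ^ 2 = A ^ 2 * P u + b ^ 2 * P t + 2 * A * b * bt).
  { unfold m, P, bt. field. exact HAb. }
  rewrite HPu, HPt in E1.
  assert (E1' : P m * (A + b) ^ 2 = 2 + 2 * A * b * bt) by lra. clear E1.
  assert (E2 : ((b' * t + b) * (A + b) - (A * u + b * t) * b') = b * (A + b) + A * b' * (t - u)).
  { unfold m. ring. }
  rewrite E2, Hb'.
  assert (E3 : b * (A + b) + A * (- (be + 2 * ga * t) * b ^ 3 / 2) * (t - u)
          = b ^ 2 + A * b ^ 3 * bt + A * b * (1 - b ^ 2 * P t)).
  { unfold bt, P. cbv beta. field. }
  rewrite E3, HPt.
  assert (HPt' : P t = / b ^ 2).
  { apply (Rmult_eq_reg_l (b ^ 2)). rewrite HPt. field. lra. apply pow_nonzero. lra. }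
  rewrite HPt'.
  assert (HPm' : P m = (2 + 2 * A * b * bt) / (A + b) ^ 2).
  { rewrite <- E1'. field. exact HAb. }
  fold m. rewrite HPm'.
  assert (2 + 2 * A * b * bt <> 0).
  { intro Z. rewrite Z in HPm'. unfold Rdiv in HPm'. rewrite Rmult_0_l in HPm'. fold m in HPm. lra. }
  field. repeat split; try lra.
Qed.

Lemma key_u (J : R -> Prop) al be ga (k b : R -> R) u v A :
  conv J -> (forall t, J t -> 0 < al + be * t + ga * t ^ 2) ->
  (forall t, J t -> is_derive k t (/ (al + be * t + ga * t ^ 2))) ->
  (forall t, J t -> 0 < b t /\ b t ^ 2 * (al + be * t + ga * t ^ 2) = 1 /\
                    is_derive b t (- (be + 2 * ga * t) * b t ^ 3 / 2)) ->
  J u -> J v -> 0 < A -> A ^ 2 * (al + be * u + ga * u ^ 2) = 1 ->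
  k ((A * u + b v * v) / (A + b v)) = (k u + k v) / 2.
Proof.
  intros HJ HP Hk Hb Hu Hv HA HAu.
  set (phi := fun t => k ((A * u + b t * t) / (A + b t)) - (k u + k t) / 2).
  assert (Hbu : b u = A).
  { destruct (Hb u Hu) as [H1 [H2 _]].
    assert (E : (b u - A) * (b u + A) = 0).
    { assert (E' : b u ^ 2 = A ^ 2).
      { apply (Rmult_eq_reg_r (al + be * u + ga * u ^ 2)). lra. specialize (HP u Hu). lra. }
      replace ((b u - A) * (b u + A)) with (b u ^ 2 - A ^ 2) by ring. lra. }
    apply Rmult_integral in E. lra. }
  assert (Hphiu : phi u = 0).
  { unfold phi. rewrite Hbu. replace ((A * u + A * u) / (A + A)) with u by (field; lra). field. }
  set (Seg := fun t => Rmin u v <= t <= Rmax u v).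
  assert (HSeg : conv Seg).
  { intros x y z [H1 H2] [H3 H4] H5. unfold Seg. lra. }
  assert (HSJ : forall t, Seg t -> J t).
  { intros t [H1 H2]. unfold Rmin, Rmax in *. destruct (Rle_dec u v).
    - apply (HJ u v t); auto.
    - apply (HJ v u t); auto. }
  assert (Hd : forall t, Seg t -> is_derive phi t 0).
  { intros t Ht. pose proof (HSJ t Ht) as Jt. destruct (Hb t Jt) as [Hbt [Hbt2 Hbd]].
    assert (Jm : J ((A * u + b t * t) / (A + b t))).
    { destruct (wmean A (b t) u t HA Hbt) as [W|W].
      - apply (HJ u t); auto.
      - apply (HJ t u); auto. }
    unfold phi. auto_derive.
    - repeat split.
      + exists (/ (al + be * ((A * u + b t * t) / (A + b t)) + ga * ((A * u + b t * t) / (A + b t)) ^ 2)).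
        apply Hk. exact Jm.
      + exists (- (be + 2 * ga * t) * b t ^ 3 / 2). exact Hbd.
      + exists (- (be + 2 * ga * t) * b t ^ 3 / 2). exact Hbd.
      + lra.
      + exists (/ (al + be * t + ga * t ^ 2)). apply Hk. exact Jt.
    - replace (Derive (fun x : R => b x) t) with (- (be + 2 * ga * t) * b t ^ 3 / 2)
        by (symmetry; apply is_derive_unique; exact Hbd).
      replace (Derive (fun x : R => k x) t) with (/ (al + be * t + ga * t ^ 2))
        by (symmetry; apply is_derive_unique; apply Hk; exact Jt).
      replace (Derive (fun x : R => k x) ((A * u + b t * t) * / (A + b t)))
        with (/ (al + be * ((A * u + b t * t) / (A + b t)) + ga * ((A * u + b t * t) / (A + b t)) ^ 2))
        by (symmetry; apply is_derive_unique; apply Hk; exact Jm).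
      pose proof (key_alg al be ga A (b t) (- (be + 2 * ga * t) * b t ^ 3 / 2) u t HA Hbt HAu Hbt2 eq_refl (HP _ Jm)) as K.
      cbv zeta in K. cbv beta in K.
      set (iPm := / (al + be * ((A * u + b t * t) / (A + b t)) + ga * ((A * u + b t * t) / (A + b t)) ^ 2)) in *.
      set (iPt := / (al + be * t + ga * t ^ 2)) in *.
      set (b' := - (be + 2 * ga * t) * b t ^ 3 / 2) in *.
      set (bb := b t) in *.
      assert (K' : iPt = 2 * (((b' * t + bb) * (A + bb) - (A * u + bb * t) * b') / (A + bb) ^ 2 * iPm)) by lra.
      rewrite K'. field. lra. }
  assert (Hv' : Seg v). { unfold Seg. split; [apply Rmin_r|apply Rmax_r]. }
  assert (Hu' : Seg u). { unfold Seg. split; [apply Rmin_l|apply Rmax_l]. }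
  pose proof (const_S Seg phi u v HSeg Hd Hu' Hv') as E.
  unfold phi in E. rewrite Hbu in E.
  replace ((A * u + A * u) / (A + A)) with u in E by (field; lra).
  assert (E2 : k ((A * u + b v * v) / (A + b v)) = (k u + k u) / 2 - k u + (k u + k v) / 2) by lra.
  rewrite E2. field.
Qed.

Lemma seg_cases u0 u y z : Rmin u0 y <= z <= Rmax u0 y ->
  (Rmin u0 u <= z <= Rmax u0 u) \/ Rabs (z - u) <= Rabs (y - u).
Proof.
  intros H. unfold Rmin, Rmax in *.
  destruct (Rle_dec u0 y); destruct (Rle_dec u0 u);
  destruct (Rle_dec z u);
  unfold Rabs; destruct (Rcase_abs (z - u)); destruct (Rcase_abs (y - u)); lra.
Qed.

Lemma poly_cont al be ga t : continuous (fun s => al + be * s + ga * s ^ 2) t.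
Proof. apply (derive_cont _ _ (be + 2 * ga * t)). auto_derive; auto. ring. Qed.

Lemma inv_poly_cont al be ga t : al + be * t + ga * t ^ 2 <> 0 ->
  continuous (fun s => / (al + be * s + ga * s ^ 2)) t.
Proof.
  intro H. apply (derive_cont _ _ (- (be + 2 * ga * t) / (al + be * t + ga * t ^ 2) ^ 2)).
  auto_derive; auto. field. auto.
Qed.

Lemma ii_to_k S f g al be ga :
  conv S -> (exists x0, S x0) ->
  (forall x, S x -> 0 < f x) -> strictly_monotone_on S (quot f g) -> continuous_on_set S (quot f g) ->
  (forall x, S x -> al * f x ^ 2 + be * f x * g x + ga * g x ^ 2 = 1) ->
  exists k : R -> R,
    (forall x, S x -> is_derive k (quot f g x) (f x ^ 2)) /\
    strictly_increasing_on (fun u => exists x, S x /\ quot f g x = u) k /\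
    (forall x y, S x -> S y -> exists z, S z /\ quot f g z = (g x + g y)/(f x + f y) /\
          k (quot f g z) = (k (quot f g x) + k (quot f g y))/2).
Proof.
  intros HS [x0 Hx0] Hf Hqm Hqc Hii.
  set (q := quot f g) in *.
  set (P := fun t => al + be * t + ga * t ^ 2).
  assert (HfP : forall x, S x -> f x ^ 2 * P (q x) = 1).
  { intros x Hx. rewrite <- (Hii x Hx). unfold P, q, quot. field. specialize (Hf x Hx). lra. }
  set (J := fun u => exists x, S x /\ q x = u).
  assert (HJ : conv J).
  { intros u v w [x [Hx Ex]] [y [Hy Ey]] Hw.
    destruct (Rle_dec x y) as [Lxy|Lxy].
    - destruct (ivt_S S q x y w HS Hqc Hx Hy Lxy) as [z [Hz Ez]]. { left. lra. }
      exists z. split; auto. apply (HS x y z); auto.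
    - destruct (ivt_S S q y x w HS Hqc Hy Hx) as [z [Hz Ez]]. { lra. } { right. lra. }
      exists z. split; auto. apply (HS y x z); auto. }
  assert (HP : forall t, J t -> 0 < P t).
  { intros t [x [Hx Ex]]. subst t. specialize (HfP x Hx). specialize (Hf x Hx).
    destruct (Rle_dec (P (q x)) 0) as [L|L]; [|lra].
    assert (f x ^ 2 * P (q x) <= 0). { apply Rmult_le_0_l; auto. apply pow2_ge_0. }
    lra. }
  set (u0 := q x0).
  assert (Ju0 : J u0) by (exists x0; auto).
  set (k := fun u => RInt (fun t => / P t) u0 u).
  assert (Hk : forall u, J u -> is_derive k u (/ P u)).
  { intros u Ju.
    pose proof (HP u Ju) as Pu.
    destruct (proj1 (contR P u) (poly_cont al be ga u) (P u / 2)) as [e [He He2]]. { lra. }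
    apply (is_derive_RInt (fun t => / P t) k u0 u).
    - apply locR. exists e. split; auto. intros y Hy.
      apply (RInt_correct (V:=R_CompleteNormedModule)).
      apply (ex_RInt_continuous (V:=R_CompleteNormedModule)). intros z Hz.
      apply inv_poly_cont. fold (P z).
      destruct (seg_cases u0 u y z Hz) as [Z|Z].
      + assert (J z).
        { unfold Rmin, Rmax in Z. destruct (Rle_dec u0 u).
          - apply (HJ u0 u z); auto.
          - apply (HJ u u0 z); auto; lra. }
        specialize (HP z H). lra.
      + assert (Rabs (z - u) < e) by lra. specialize (He2 z H).
        apply Rabs_def2 in He2. lra.
    - apply inv_poly_cont. fold (P u). lra. }
  exists k. split; [|split].
  - intros x Hx. apply (is_derive_eq k (q x) (/ P (q x))).
    + apply Hk. exists x; auto.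
    + specialize (HfP x Hx). specialize (Hf x Hx).
      apply (Rmult_eq_reg_r (P (q x))). rewrite Rinv_l. lra.
      assert (0 < P (q x)) by (apply HP; exists x; auto). lra.
      assert (0 < P (q x)) by (apply HP; exists x; auto). lra.
  - intros u v Ju Jv Luv. apply (incr_S J k (fun t => / P t) u v HJ Hk); auto.
    intros t Jt. apply Rinv_0_lt_compat. apply HP. exact Jt.
  - intros x y Hx Hy.
    pose proof (Hf x Hx) as fx. pose proof (Hf y Hy) as fy.
    assert (Ec : (g x + g y) / (f x + f y) = (f x * q x + f y * q y) / (f x + f y)).
    { unfold q, quot. field. lra. }
    assert (Jc : J ((g x + g y) / (f x + f y))).
    { rewrite Ec. destruct (wmean (f x) (f y) (q x) (q y) fx fy) as [W|W].
      - apply (HJ (q x) (q y)); auto; [exists x|exists y]; auto.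
      - apply (HJ (q y) (q x)); auto; [exists y|exists x]; auto. }
    destruct Jc as [z [Hz Ez]]. exists z. split; auto. split; auto.
    rewrite Ez, Ec.
    set (b := fun t => / sqrt (P t)).
    assert (Hbv : b (q y) = f y).
    { unfold b. rewrite (sqrt_lem_1 (P (q y)) (/ f y)).
      - field. lra.
      - left. apply HP. exists y; auto.
      - left. apply Rinv_0_lt_compat. auto.
      - specialize (HfP y Hy). apply (Rmult_eq_reg_l (f y ^ 2)). rewrite HfP. field. lra.
        apply pow_nonzero. lra. }
    rewrite <- Hbv.
    apply (key_u J al be ga k b (q x) (q y) (f x) HJ).
    + exact HP.
    + exact Hk.
    + intros t Jt. pose proof (HP t Jt) as Pt. fold (P t).
      assert (Hs : 0 < sqrt (P t)) by (apply sqrt_lt_R0; auto).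
      split; [|split].
      * unfold b. apply Rinv_0_lt_compat. auto.
      * unfold b. rewrite pow_inv. replace (sqrt (P t) ^ 2) with (P t).
        field. lra. simpl. rewrite Rmult_1_r. rewrite sqrt_sqrt; lra.
      * unfold b, P. auto_derive.
        -- replace (al + be * t + ga * (t * (t * 1))) with (P t) by (unfold P; ring).
           repeat split; lra.
        -- replace (al + be * t + ga * (t * (t * 1))) with (P t) by (unfold P; ring).
           fold (P t). field. lra.
    + exists x; auto.
    + exists y; auto.
    + auto.
    + specialize (HfP x Hx). exact HfP.
Qed.

Lemma cont_mult_R (p r : R -> R) x : continuous p x -> continuous r x -> continuous (fun t => p t * r t) x.
Proof. intros H1 H2. apply (@continuous_mult R_UniformSpace R_AbsRing p r x H1 H2). Qed.
Lemma cont_minus_R (p r : R -> R) x : continuous p x -> continuous r x -> continuous (fun t => p t - r t) x.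
Proof. intros H1 H2. apply (@continuous_minus R_UniformSpace R_AbsRing R_NormedModule p r x H1 H2). Qed.

Lemma ii_to_i S f g : conv S -> (exists x0, S x0) -> B0 S f g -> stmt_ii S f g -> stmt_i S f g.
Proof.
  intros HS Hne [Hf [Hqm Hqc]] [al [be [ga Hii]]].
  destruct (ii_to_k S f g al be ga HS Hne Hf Hqm Hqc Hii) as [k [Hk [Hkinc Hkey]]].
  set (q := quot f g) in *.
  assert (Hm : strictly_monotone_on S (fun x => k (q x))).
  { destruct Hqm as [Hq|Hq]; [left|right]; intros x y Hx Hy Lxy.
    - apply Hkinc; [exists x|exists y|]; auto.
    - apply Hkinc; [exists y|exists x|]; auto. }
  exists (fun x => k (q x)). split; [|split].
  - intros x Hx. apply (continuous_comp q k x (Hqc x Hx)).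
    apply (derive_cont k (q x) (f x ^ 2)). apply Hk; auto.
  - exact Hm.
  - apply star_of.
    + apply sm_inj. exact Hqm.
    + apply sm_inj. exact Hm.
    + exact Hkey.
Qed.

Lemma deriv_q S f g x : Bn 1 S f g -> S x ->
  is_derive (quot f g) x ((Derive g x * f x - g x * Derive f x) / f x ^ 2).
Proof.
  intros [Hf [[Fd Fc] [[Gd Gc] Hq]]] Hx.
  unfold quot. apply is_derive_div.
  - apply Derive_correct. apply (Gd 0%nat); auto.
  - apply Derive_correct. apply (Fd 0%nat); auto.
  - specialize (Hf x Hx). lra.
Qed.

Lemma W10_eq f g x : W 1 0 f g x = Derive f x * g x - f x * Derive g x.
Proof. reflexivity. Qed.

Lemma W10_nz S f g x : Bn 1 S f g -> S x -> W 1 0 f g x <> 0.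
Proof.
  intros HB Hx. pose proof (deriv_q S f g x HB Hx) as D.
  destruct HB as [Hf [_ [_ Hq]]]. specialize (Hq x Hx). specialize (Hf x Hx).
  rewrite (is_derive_unique _ _ _ D) in Hq. rewrite W10_eq. intro E. apply Hq.
  replace (Derive g x * f x - g x * Derive f x) with (- (Derive f x * g x - f x * Derive g x)) by ring.
  rewrite E. field. lra.
Qed.

Lemma W10_cont S f g x : Bn 1 S f g -> S x -> continuous (W 1 0 f g) x.
Proof.
  intros [Hf [[Fd Fc] [[Gd Gc] Hq]]] Hx. unfold W.
  apply cont_minus_R; apply cont_mult_R.
  - apply (Fc 1%nat); auto.
  - apply (Gc 0%nat); auto.
  - apply (Fc 0%nat); auto.
  - apply (Gc 1%nat); auto.
Qed.

Lemma ii_to_iii S f g : conv S -> (exists x0, S x0) -> B0 S f g -> Bn 1 S f g -> stmt_ii S f g -> stmt_iii S f g.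
Proof.
  intros HS Hne [Hf [Hqm Hqc]] HB [al [be [ga Hii]]].
  destruct (ii_to_k S f g al be ga HS Hne Hf Hqm Hqc Hii) as [k [Hk [Hkinc Hkey]]].
  assert (Hm : strictly_monotone_on S (fun x => k (quot f g x))).
  { destruct Hqm as [Hq|Hq]; [left|right]; intros x y Hx Hy Lxy.
    - apply Hkinc; [exists x|exists y|]; auto.
    - apply Hkinc; [exists y|exists x|]; auto. }
  exists (fun x => - k (quot f g x)). split.
  - intros x Hx. pose proof (deriv_q S f g x HB Hx) as Dq.
    pose proof (is_derive_comp k (quot f g) x _ _ (Hk x Hx) Dq) as D.
    apply (is_derive_opp (K:=R_AbsRing) (V:=R_NormedModule)) in D.
    apply (is_derive_eq _ _ _ _ D). rewrite W10_eq. simpl. unfold scal; simpl. unfold mult; simpl.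
    unfold opp; simpl. field. specialize (Hf x Hx). lra.
  - apply star_of.
    + apply sm_inj. exact Hqm.
    + intros x y Hx Hy E. apply (sm_inj S _ Hm x y Hx Hy). lra.
    + intros x y Hx Hy. destruct (Hkey x y Hx Hy) as [z [Hz [E1 E2]]].
      exists z. split; auto. split; auto. rewrite E2. field.
Qed.

Lemma iii_to_i S f g : conv S -> (exists x0, S x0) -> Bn 1 S f g -> stmt_iii S f g -> stmt_i S f g.
Proof.
  intros HS [x0 Hx0] HB [h [Hh Hst]].
  exists h. split; [|split]; auto.
  - intros x Hx. apply (derive_cont h x (W 1 0 f g x)). auto.
  - assert (Hsign : forall x y, S x -> S y -> 0 < W 1 0 f g x -> 0 < W 1 0 f g y).
    { intros x y Hx Hy Px. destruct (Rlt_dec 0 (W 1 0 f g y)) as [L|L]; auto. exfalso.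
      assert (Ny : W 1 0 f g y < 0). { pose proof (W10_nz S f g y HB Hy). lra. }
      destruct (Rle_dec x y) as [Lxy|Lxy].
      - destruct (ivt_S S (W 1 0 f g) x y 0 HS (fun t Ht => W10_cont S f g t HB Ht) Hx Hy Lxy) as [z [Hz Ez]].
        { right. lra. }
        apply (W10_nz S f g z HB); auto. apply (HS x y z); auto.
      - destruct (ivt_S S (W 1 0 f g) y x 0 HS (fun t Ht => W10_cont S f g t HB Ht) Hy Hx) as [z [Hz Ez]].
        { lra. } { left. lra. }
        apply (W10_nz S f g z HB); auto. apply (HS y x z); auto. }
    unfold strictly_monotone_on. destruct (Rlt_dec 0 (W 1 0 f g x0)) as [P0|P0].
    + left. intros x y Hx Hy Lxy. apply (incr_S S h (W 1 0 f g) x y HS Hh); auto.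
      intros t Ht. apply (Hsign x0 t); auto.
    + right. assert (N : forall x, S x -> W 1 0 f g x < 0).
      { intros x Hx. destruct (Rlt_dec 0 (W 1 0 f g x)) as [L|L].
        - exfalso. apply P0. apply (Hsign x x0); auto.
        - pose proof (W10_nz S f g x HB Hx). lra. }
      intros x y Hx Hy Lxy.
      assert (- h x < - h y); [|lra].
      apply (incr_S S (fun t => - h t) (fun t => - W 1 0 f g t) x y HS); auto.
      * intros t Ht. apply (is_derive_opp (K:=R_AbsRing) (V:=R_NormedModule)). auto.
      * intros t Ht. specialize (N t Ht). lra.
Qed.

Lemma alg_ii_iv al be ga f g f1 g1 f2 g2 :
  al * f ^ 2 + be * f * g + ga * g ^ 2 = 1 ->
  2 * al * f * f1 + be * (f1 * g + f * g1) + 2 * ga * g * g1 = 0 ->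
  2 * al * (f1 ^ 2 + f * f2) + be * (f2 * g + 2 * f1 * g1 + f * g2) + 2 * ga * (g1 ^ 2 + g * g2) = 0 ->
  f2 * g1 - f1 * g2 = (al * ga - be ^ 2 / 4) * (f1 * g - f * g1) ^ 3.
Proof.
  intros HE HE1 HE2.
  assert (Id : f2 * g1 - f1 * g2 - (al * ga - be ^ 2 / 4) * (f1 * g - f * g1) ^ 3 =
    (1 - (al * f ^ 2 + be * f * g + ga * g ^ 2)) *
       ((f2 * g1 - f1 * g2) + (f1 * g - f * g1) * (al * f1 ^ 2 + be * f1 * g1 + ga * g1 ^ 2))
    - (f1 * g - f * g1) * (2 * al * (f1 ^ 2 + f * f2) + be * (f2 * g + 2 * f1 * g1 + f * g2) + 2 * ga * (g1 ^ 2 + g * g2)) / 2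
    + (2 * al * f * f1 + be * (f1 * g + f * g1) + 2 * ga * g * g1) *
       ((f1 * g - f * g1) * (2 * al * f * f1 + be * (f1 * g + f * g1) + 2 * ga * g * g1) / 4
        - (f * g2 - g * f2) / 2)).
  { field. }
  rewrite HE, HE1, HE2 in Id. lra.
Qed.

Ltac rdv H := let T := type of H in match T with is_derive ?F ?x ?l =>
  replace (Derive (fun y => F y) x) with l by (symmetry; apply is_derive_unique; exact H) end.

Definition D2 (S : R -> Prop) (F G F1 G1 F2 G2 : R -> R) := forall x, S x ->
  is_derive F x (F1 x) /\ is_derive G x (G1 x) /\ is_derive F1 x (F2 x) /\ is_derive G1 x (G2 x).

Lemma loc_const S (E : R -> R) c x : opn S -> S x -> (forall t, S t -> E t = c) -> is_derive E x 0.
Proof.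
  intros Ho Hx HE. apply (is_derive_ext_loc (fun _ => c)).
  - apply locR. destruct (Ho x Hx) as [e [He H]]. exists e. split; auto.
    intros y Hy. symmetry. apply HE. apply H. exact Hy.
  - apply (is_derive_eq _ _ _ _ (is_derive_const (K:=R_AbsRing) (V:=R_NormedModule) c x)). reflexivity.
Qed.

Lemma uniq_deriv (p : R -> R) x l1 l2 : is_derive p x l1 -> is_derive p x l2 -> l1 = l2.
Proof. intros H1 H2. rewrite <- (is_derive_unique _ _ _ H1). apply is_derive_unique. exact H2. Qed.

Lemma gen_ii_iv S F G F1 G1 F2 G2 al be ga : opn S -> D2 S F G F1 G1 F2 G2 ->
  (forall x, S x -> al * F x ^ 2 + be * F x * G x + ga * G x ^ 2 = 1) ->
  forall x, S x -> F2 x * G1 x - F1 x * G2 x = (al * ga - be ^ 2 / 4) * (F1 x * G x - F x * G1 x) ^ 3.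
Proof.
  intros Ho HD HE.
  assert (HE1 : forall x, S x -> 2 * al * F x * F1 x + be * (F1 x * G x + F x * G1 x) + 2 * ga * G x * G1 x = 0).
  { intros x Hx. destruct (HD x Hx) as [DF [DG [DF1 DG1]]].
    apply (uniq_deriv (fun t => al * F t ^ 2 + be * F t * G t + ga * G t ^ 2) x).
    - auto_derive.
      + repeat split; try (eexists; eassumption).
      + rdv DF; rdv DG. ring.
    - apply (loc_const S _ 1 x Ho Hx HE). }
  intros x Hx. destruct (HD x Hx) as [DF [DG [DF1 DG1]]].
  apply (alg_ii_iv al be ga); auto.
  apply (uniq_deriv (fun t => 2 * al * F t * F1 t + be * (F1 t * G t + F t * G1 t) + 2 * ga * G t * G1 t) x).
  - auto_derive.
    + repeat split; try (eexists; eassumption).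
    + rdv DF; rdv DG; rdv DF1; rdv DG1. ring.
  - apply (loc_const S _ 0 x Ho Hx HE1).
Qed.

Lemma gen_iv_ii S F G F1 G1 F2 G2 de : conv S -> opn S -> (exists x0, S x0) -> D2 S F G F1 G1 F2 G2 ->
  (forall x, S x -> F1 x * G x - F x * G1 x <> 0) ->
  (forall x, S x -> F2 x * G1 x - F1 x * G2 x = de * (F1 x * G x - F x * G1 x) ^ 3) ->
  exists al be ga, forall x, S x -> al * F x ^ 2 + be * F x * G x + ga * G x ^ 2 = 1.
Proof.
  intros Hc Ho [x0 Hx0] HD Hw HW.
  set (a := fun t => F1 t ^ 2 / (F1 t * G t - F t * G1 t) ^ 2 + de * F t ^ 2).
  set (b := fun t => F1 t * G1 t / (F1 t * G t - F t * G1 t) ^ 2 + de * F t * G t).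
  set (c := fun t => G1 t ^ 2 / (F1 t * G t - F t * G1 t) ^ 2 + de * G t ^ 2).
  assert (Za : forall x, S x -> is_derive a x 0).
  { intros x Hx. destruct (HD x Hx) as [DF [DG [DF1 DG1]]]. pose proof (Hw x Hx) as w0. pose proof (HW x Hx) as W0.
    unfold a. auto_derive.
    - repeat split; try (eexists; eassumption). intro Z; apply w0; nra.
    - rdv DF; rdv DG; rdv DF1; rdv DG1.
      transitivity (-2 * F x * F1 x * ((F2 x * G1 x - F1 x * G2 x) - de * (F1 x * G x - F x * G1 x) ^ 3) / (F1 x * G x - F x * G1 x) ^ 3).
      + field. auto.
      + rewrite W0. field. auto. }
  assert (Zb : forall x, S x -> is_derive b x 0).
  { intros x Hx. destruct (HD x Hx) as [DF [DG [DF1 DG1]]]. pose proof (Hw x Hx) as w0. pose proof (HW x Hx) as W0.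
    unfold b. auto_derive.
    - repeat split; try (eexists; eassumption). intro Z; apply w0; nra.
    - rdv DF; rdv DG; rdv DF1; rdv DG1.
      transitivity (- (F1 x * G x + F x * G1 x) * ((F2 x * G1 x - F1 x * G2 x) - de * (F1 x * G x - F x * G1 x) ^ 3) / (F1 x * G x - F x * G1 x) ^ 3).
      + field. auto.
      + rewrite W0. field. auto. }
  assert (Zc : forall x, S x -> is_derive c x 0).
  { intros x Hx. destruct (HD x Hx) as [DF [DG [DF1 DG1]]]. pose proof (Hw x Hx) as w0. pose proof (HW x Hx) as W0.
    unfold c. auto_derive.
    - repeat split; try (eexists; eassumption). intro Z; apply w0; nra.
    - rdv DF; rdv DG; rdv DF1; rdv DG1.
      transitivity (-2 * G x * G1 x * ((F2 x * G1 x - F1 x * G2 x) - de * (F1 x * G x - F x * G1 x) ^ 3) / (F1 x * G x - F x * G1 x) ^ 3).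
      + field. auto.
      + rewrite W0. field. auto. }
  exists (c x0), (-2 * b x0), (a x0). intros x Hx.
  rewrite (const_S S a x0 x Hc Za Hx0 Hx), (const_S S b x0 x Hc Zb Hx0 Hx), (const_S S c x0 x Hc Zc Hx0 Hx).
  unfold a, b, c. field. apply Hw. auto.
Qed.

Lemma W21_eq f g x : W 2 1 f g x = Derive (Derive f) x * Derive g x - Derive f x * Derive (Derive g) x.
Proof. reflexivity. Qed.
Lemma W20_eq f g x : W 2 0 f g x = Derive (Derive f) x * g x - f x * Derive (Derive g) x.
Proof. reflexivity. Qed.

Lemma bn2_bn1 S f g : Bn 2 S f g -> Bn 1 S f g.
Proof.
  intros [Hf [[Fd Fc] [[Gd Gc] Hq]]]. split; [auto|split; [split|split; [split|auto]]].
  - intros k Hk. apply Fd. lia.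
  - intros k Hk. apply Fc. lia.
  - intros k Hk. apply Gd. lia.
  - intros k Hk. apply Gc. lia.
Qed.

Lemma bn2_D2 S f g : Bn 2 S f g -> D2 S f g (Derive f) (Derive g) (Derive (Derive f)) (Derive (Derive g)).
Proof.
  intros [Hf [[Fd Fc] [[Gd Gc] Hq]]] x Hx. split; [|split; [|split]]; apply Derive_correct.
  - exact (Fd 0%nat ltac:(lia) x Hx).
  - exact (Gd 0%nat ltac:(lia) x Hx).
  - exact (Fd 1%nat ltac:(lia) x Hx).
  - exact (Gd 1%nat ltac:(lia) x Hx).
Qed.

Lemma ii_iv S f g : opn S -> Bn 2 S f g -> stmt_ii S f g -> stmt_iv S f g.
Proof.
  intros Ho HB [al [be [ga Hii]]]. exists (al * ga - be ^ 2 / 4). intros x Hx.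
  rewrite W21_eq, W10_eq. apply (gen_ii_iv S f g _ _ _ _ al be ga Ho (bn2_D2 S f g HB) Hii x Hx).
Qed.

Lemma iv_ii S f g : conv S -> opn S -> (exists x0, S x0) -> Bn 2 S f g -> stmt_iv S f g -> stmt_ii S f g.
Proof.
  intros Hc Ho Hne HB [de Hde].
  apply (gen_iv_ii S f g _ _ _ _ de Hc Ho Hne (bn2_D2 S f g HB)).
  - intros x Hx. rewrite <- W10_eq. apply (W10_nz S f g x (bn2_bn1 S f g HB) Hx).
  - intros x Hx. rewrite <- W21_eq, <- W10_eq. auto.
Qed.

Lemma iv_v S f g : opn S -> Bn 2 S f g -> stmt_iv S f g -> stmt_v S f g.
Proof.
  intros Ho HB [de Hde] x Hx.
  pose proof (bn2_D2 S f g HB) as HD.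
  assert (Hw : forall t, S t -> W 1 0 f g t <> 0) by (intros t Ht; apply (W10_nz S f g t (bn2_bn1 S f g HB) Ht)).
  apply (is_derive_ext_loc (fun t => - de * (Derive f t * g t - f t * Derive g t) ^ 2)).
  - apply locR. destruct (Ho x Hx) as [e [He H]]. exists e. split; auto.
    intros y Hy. specialize (H y Hy). unfold Psi. rewrite (Hde y H). rewrite W10_eq. match goal with |- ?a = ?b => change (@eq R a b) end. field.
    rewrite <- W10_eq. auto.
  - destruct (HD x Hx) as [DF [DG [DF1 DG1]]]. auto_derive.
    + repeat split; try (eexists; eassumption).
    + rdv DF; rdv DG; rdv DF1; rdv DG1. unfold Phi, Psi. rewrite (Hde x Hx), W20_eq, W10_eq.
      field. rewrite <- W10_eq. auto.
Qed.

Lemma v_iv S f g : conv S -> opn S -> (exists x0, S x0) -> Bn 2 S f g -> stmt_v S f g -> stmt_iv S f g.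
Proof.
  intros Hc Ho [x0 Hx0] HB Hv.
  pose proof (bn2_D2 S f g HB) as HD.
  assert (Hw : forall t, S t -> W 1 0 f g t <> 0) by (intros t Ht; apply (W10_nz S f g t (bn2_bn1 S f g HB) Ht)).
  set (R0 := fun t => Psi f g t / (Derive f t * g t - f t * Derive g t) ^ 2).
  assert (ZR : forall x, S x -> is_derive R0 x 0).
  { intros x Hx. destruct (HD x Hx) as [DF [DG [DF1 DG1]]]. pose proof (Hv x Hx) as DP.
    pose proof (Hw x Hx) as w0. rewrite W10_eq in w0.
    unfold R0. auto_derive.
    - repeat split; try (eexists; eassumption). intro Z; apply w0; nra.
    - rdv DF; rdv DG; rdv DF1; rdv DG1. rdv DP. unfold Phi. rewrite W20_eq, W10_eq. field. auto. }
  exists (- R0 x0). intros x Hx.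
  rewrite (const_S S R0 x0 x Hc ZR Hx0 Hx). unfold R0, Psi.
  pose proof (Hw x Hx) as w0. rewrite W10_eq in *. field. auto.
Qed.

Ltac toR := match goal with |- ?a = ?b => change (@eq R a b) end.

Lemma ball_seg s0 r a b z : Rabs (a - s0) < r -> Rabs (b - s0) < r -> Rmin a b <= z <= Rmax a b ->
  Rabs (z - s0) < r.
Proof.
  intros Ha Hb Hz. apply Rabs_def2 in Ha. apply Rabs_def2 in Hb. apply Rabs_def1;
  unfold Rmin, Rmax in Hz; destruct (Rle_dec a b); lra.
Qed.

Lemma exRInt_ball (Z : R -> R) s0 r a b : (forall t, Rabs (t - s0) < r -> continuous Z t) ->
  Rabs (a - s0) < r -> Rabs (b - s0) < r -> ex_RInt Z a b.
Proof.
  intros Hc Ha Hb. apply (ex_RInt_continuous (V:=R_CompleteNormedModule)). intros z Hz.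
  apply Hc. apply (ball_seg s0 r a b z); auto.
Qed.

Lemma RInt_shift (Z : R -> R) t de : ex_RInt Z (t - de) (t + de) ->
  is_RInt (fun d => Z (t + d)) (- de) de (RInt Z (t - de) (t + de)).
Proof.
  intro Hex. pose proof (RInt_correct _ _ _ Hex) as H.
  replace (t - de) with (1 * (- de) + t) in H by ring.
  replace (t + de) with (1 * de + t) in H by ring.
  apply (is_RInt_comp_lin (V:=R_NormedModule)) in H.
  replace (1 * (- de) + t) with (t - de) in H by ring.
  replace (1 * de + t) with (t + de) in H by ring.
  revert H. apply is_RInt_ext. intros x _. unfold scal; simpl. unfold mult; simpl. rewrite Rmult_1_l. f_equal. ring.
Qed.

Lemma RInt_refl (Z : R -> R) t de : ex_RInt Z (t - de) (t + de) ->
  is_RInt (fun d => Z (t - d)) (- de) de (RInt Z (t - de) (t + de)).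
Proof.
  intro Hex. pose proof (RInt_correct _ _ _ Hex) as H.
  apply (is_RInt_swap (V:=R_NormedModule)) in H.
  replace (t + de) with ((-1) * (- de) + t) in H by ring.
  replace (t - de) with ((-1) * de + t) in H by ring.
  apply (is_RInt_comp_lin (V:=R_NormedModule)) in H.
  apply (is_RInt_opp (V:=R_NormedModule)) in H.
  replace ((-1) * (- de) + t) with (t + de) in H by ring.
  replace ((-1) * de + t) with (t - de) in H by ring.
  unfold opp in H at 2; simpl in H. unfold opp in H; simpl in H.
  rewrite Ropp_involutive in H.
  revert H. apply is_RInt_ext. intros x _. unfold scal; simpl. unfold mult; simpl. 
  replace (-1 * x + t) with (t - x) by ring. ring.
Qed.

Lemma deriv_RInt_ball (Z : R -> R) s0 r y : (forall t, Rabs (t - s0) < r -> continuous Z t) ->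
  Rabs (y - s0) < r -> is_derive (fun y => RInt Z s0 y) y (Z y).
Proof.
  intros Hc Hy. apply (is_derive_RInt Z (fun y => RInt Z s0 y) s0 y).
  - apply locR. exists (r - Rabs (y - s0)). split; [lra|]. intros y' Hy'.
    apply (RInt_correct (V:=R_CompleteNormedModule)). apply (exRInt_ball Z s0 r); auto.
    + rewrite Rminus_diag, Rabs_R0. apply (Rle_lt_trans _ (Rabs (y - s0))); [apply Rabs_pos|lra].
    + replace (y' - s0) with ((y' - y) + (y - s0)) by ring.
      eapply Rle_lt_trans; [apply Rabs_triang|]. lra.
  - apply Hc; auto.
Qed.

Lemma smooth_loc (K : R -> Prop) (Z L : R -> R) (s0 rho de : R) :
  0 < rho -> (forall t, Rabs (t - s0) < rho -> K t) ->
  0 < de -> 4 * de <= rho ->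
  (forall t, K t -> continuous Z t) ->
  (forall d, Rabs d <= de -> continuous L d /\ 0 < L d) ->
  (forall t d, K (t - d) -> K (t + d) -> K (s0 - d) -> K (s0 + d) -> Z (t - d) + Z (t + d) = L d * Z t) ->
  forall t, Rabs (t - s0) < rho / 4 ->
    is_derive Z t (Derive Z t) /\
    is_derive (Derive Z) t (4 * (L (2 * de) - 2) / (RInt L (- de) de) ^ 2 * Z t).
Proof.
  intros Hrho HK Hde Hde4 HZc HL Hrel.
  set (C := RInt L (- de) de).
  assert (HcB : forall t, Rabs (t - s0) < rho -> continuous Z t) by (intros; apply HZc; apply HK; auto).
  assert (Cpos : 0 < C).
  { apply RInt_gt_0; [lra| |].
    - intros x Hx. apply HL. apply Rabs_le. lra.
    - intros x Hx. apply HL. apply Rabs_le. lra. }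
  assert (HLi : is_RInt L (- de) de C).
  { apply (RInt_correct (V:=R_CompleteNormedModule)). apply (ex_RInt_continuous (V:=R_CompleteNormedModule)).
    intros z Hz. apply HL. rewrite Rmin_left in Hz by lra. rewrite Rmax_right in Hz by lra. apply Rabs_le. lra. }
  assert (Hrel' : forall t d, Rabs (t - s0) + Rabs d < rho -> Z (t - d) + Z (t + d) = L d * Z t).
  { intros t d H. apply Hrel; apply HK.
    - replace (t - d - s0) with ((t - s0) + - d) by ring. eapply Rle_lt_trans; [apply Rabs_triang|].
      rewrite Rabs_Ropp. lra.
    - replace (t + d - s0) with ((t - s0) + d) by ring. eapply Rle_lt_trans; [apply Rabs_triang|]. lra.
    - replace (s0 - d - s0) with (- d) by ring. rewrite Rabs_Ropp. pose proof (Rabs_pos (t - s0)). lra.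
    - replace (s0 + d - s0) with d by ring. pose proof (Rabs_pos (t - s0)). lra. }
  assert (Hpm : forall t e, Rabs (t - s0) < rho / 2 -> Rabs e <= de -> Rabs (t + e - s0) < rho).
  { intros t e H1 H2. replace (t + e - s0) with ((t - s0) + e) by ring.
    eapply Rle_lt_trans; [apply Rabs_triang|]. lra. }
  assert (Ha : forall t, Rabs (t - s0) < rho / 2 -> 2 * RInt Z (t - de) (t + de) = Z t * C).
  { intros t Ht.
    assert (exI : ex_RInt Z (t - de) (t + de)).
    { apply (exRInt_ball Z s0 rho); auto.
      - replace (t - de) with (t + - de) by ring. apply Hpm; auto. rewrite Rabs_Ropp, (Rabs_pos_eq de); lra.
      - apply Hpm; auto. rewrite (Rabs_pos_eq de); lra. }
    pose proof (is_RInt_plus _ _ _ _ _ _ (RInt_shift Z t de exI) (RInt_refl Z t de exI)) as H1.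
    pose proof (is_RInt_scal _ _ _ (Z t) _ HLi) as H2.
    assert (H3 : is_RInt (fun y => plus (Z (t + y)) (Z (t - y))) (- de) de (scal (Z t) C)).
    { revert H2. apply is_RInt_ext. intros x Hx. rewrite Rmin_left in Hx by lra. rewrite Rmax_right in Hx by lra.
      unfold scal, plus; simpl. unfold mult; simpl.
      rewrite Rplus_comm. rewrite (Hrel' t x). ring.
      assert (Rabs x < de) by (apply Rabs_def1; lra). lra. }
    pose proof (is_RInt_unique _ _ _ _ H1) as U1. pose proof (is_RInt_unique _ _ _ _ H3) as U2.
    unfold plus, scal in U1, U2; simpl in U1, U2. unfold mult in U2; simpl in U2.
    rewrite U1 in U2. lra. }
  set (Phi := fun y => RInt Z s0 (y + de) - RInt Z s0 (y - de)).
  assert (HPhi : forall t, Rabs (t - s0) < rho / 2 -> RInt Z (t - de) (t + de) = Phi t).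
  { intros t Ht. unfold Phi.
    assert (A1 : Rabs (t + de - s0) < rho) by (apply Hpm; auto; rewrite (Rabs_pos_eq de); lra).
    assert (A2 : Rabs (t - de - s0) < rho).
    { replace (t - de) with (t + - de) by ring. apply Hpm; auto. rewrite Rabs_Ropp, (Rabs_pos_eq de); lra. }
    assert (A0 : Rabs (s0 - s0) < rho) by (rewrite Rminus_diag, Rabs_R0; lra).
    rewrite <- (RInt_Chasles Z (t - de) s0 (t + de)).
    - rewrite <- (opp_RInt_swap Z s0 (t - de)). unfold plus, opp; simpl. ring.
      apply (exRInt_ball Z s0 rho); auto.
    - apply (exRInt_ball Z s0 rho); auto.
    - apply (exRInt_ball Z s0 rho); auto. }
  assert (HdPhi : forall t, Rabs (t - s0) < rho / 2 -> is_derive Phi t (Z (t + de) - Z (t - de))).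
  { intros t Ht.
    assert (A1 : Rabs (t + de - s0) < rho) by (apply Hpm; auto; rewrite (Rabs_pos_eq de); lra).
    assert (A2 : Rabs (t - de - s0) < rho).
    { replace (t - de) with (t + - de) by ring. apply Hpm; auto. rewrite Rabs_Ropp, (Rabs_pos_eq de); lra. }
    pose proof (is_derive_comp (fun y => RInt Z s0 y) (fun y => y + de) t _ 1 (deriv_RInt_ball Z s0 rho (t + de) HcB A1)) as D1.
    pose proof (is_derive_comp (fun y => RInt Z s0 y) (fun y => y - de) t _ 1 (deriv_RInt_ball Z s0 rho (t - de) HcB A2)) as D2.
    assert (E1 : is_derive (fun y : R => y + de) t 1).
    { auto_derive; auto. }
    assert (E2 : is_derive (fun y : R => y - de) t 1).
    { auto_derive; auto. }
    specialize (D1 E1). specialize (D2 E2).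
    pose proof (is_derive_minus _ _ _ _ _ D1 D2) as D.
    apply (is_derive_eq _ _ _ _ D). unfold minus, plus, opp, scal; simpl. unfold mult; simpl. ring. }
  assert (HZ1 : forall t, Rabs (t - s0) < rho / 2 -> is_derive Z t (2 * (Z (t + de) - Z (t - de)) / C)).
  { intros t Ht. apply (is_derive_ext_loc (fun y => (2 / C) * Phi y)).
    - apply locR. exists (rho / 2 - Rabs (t - s0)). split; [lra|]. intros y Hy.
      assert (Hy2 : Rabs (y - s0) < rho / 2).
      { replace (y - s0) with ((y - t) + (t - s0)) by ring. eapply Rle_lt_trans; [apply Rabs_triang|]. lra. }
      rewrite <- (HPhi y Hy2). apply (Rmult_eq_reg_r C); [|lra]. rewrite <- (Ha y Hy2). field. lra.
    - apply (is_derive_eq _ _ (2 / C * (Z (t + de) - Z (t - de)))).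
      + apply is_derive_scal. apply HdPhi; auto.
      + toR. field. lra. }
  intros t Ht.
  assert (Ht2 : Rabs (t - s0) < rho / 2) by lra.
  split.
  - rewrite (is_derive_unique _ _ _ (HZ1 t Ht2)). apply HZ1; auto.
  - set (Z1 := fun y => 2 * (Z (y + de) - Z (y - de)) / C).
    assert (B1 : Rabs (t + de - s0) < rho / 2).
    { replace (t + de - s0) with ((t - s0) + de) by ring. eapply Rle_lt_trans; [apply Rabs_triang|].
      rewrite (Rabs_pos_eq de); lra. }
    assert (B2 : Rabs (t - de - s0) < rho / 2).
    { replace (t - de - s0) with ((t - s0) + - de) by ring. eapply Rle_lt_trans; [apply Rabs_triang|].
      rewrite Rabs_Ropp, (Rabs_pos_eq de); lra. }
    pose proof (HZ1 _ B1) as D1. pose proof (HZ1 _ B2) as D2.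
    apply (is_derive_ext_loc Z1).
    + apply locR. exists (rho / 2 - Rabs (t - s0)). split; [lra|]. intros y Hy.
      assert (Hy2 : Rabs (y - s0) < rho / 2).
      { replace (y - s0) with ((y - t) + (t - s0)) by ring. eapply Rle_lt_trans; [apply Rabs_triang|]. lra. }
      symmetry. apply is_derive_unique. apply HZ1. auto.
    + unfold Z1. auto_derive.
      * repeat split; try (eexists; eassumption).
      * replace (t + - de) with (t - de) by ring. rdv D1. rdv D2.
        replace (t + de + de) with (t + 2 * de) by ring. replace (t + de - de) with t by ring.
        replace (t - de + de) with t by ring. replace (t - de - de) with (t - 2 * de) by ring.
        assert (Hr : Z (t - 2 * de) + Z (t + 2 * de) = L (2 * de) * Z t).
        { apply Hrel'. rewrite (Rabs_pos_eq (2 * de)); lra. }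
        assert (Hr' : Z (t + 2 * de) = L (2 * de) * Z t - Z (t - 2 * de)) by lra.
        rewrite Hr'. fold C. field. lra.
Qed.

Definition Kset (S : R -> Prop) (p : R -> R) (s : R) := exists x, S x /\ p x = s.

Lemma img_conv S p : conv S -> continuous_on_set S p -> conv (Kset S p).
Proof.
  intros HS Hc u v w [x [Hx Ex]] [y [Hy Ey]] Hw.
  destruct (Rle_dec x y) as [Lxy|Lxy].
  - destruct (ivt_S S p x y w HS Hc Hx Hy Lxy) as [z [Hz Ez]]. { left. lra. }
    exists z. split; auto. apply (HS x y z); auto.
  - destruct (ivt_S S p y x w HS Hc Hy Hx) as [z [Hz Ez]]. { lra. } { right. lra. }
    exists z. split; auto. apply (HS y x z); auto.
Qed.

Lemma sm_between S p x1 x2 y : strictly_monotone_on S p -> S x1 -> S x2 -> S y -> x1 < x2 ->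
  Rmin (p x1) (p x2) < p y < Rmax (p x1) (p x2) -> x1 < y < x2.
Proof.
  intros [Hm|Hm] H1 H2 Hy L12 Hb.
  - pose proof (Hm x1 x2 H1 H2 L12) as P12. rewrite Rmin_left in Hb by lra. rewrite Rmax_right in Hb by lra.
    split.
    + destruct (Rtotal_order x1 y) as [L|[L|L]]; auto. subst. lra. specialize (Hm y x1 Hy H1 L). lra.
    + destruct (Rtotal_order y x2) as [L|[L|L]]; auto. subst. lra. specialize (Hm x2 y H2 Hy L). lra.
  - pose proof (Hm x1 x2 H1 H2 L12) as P12. rewrite Rmin_right in Hb by lra. rewrite Rmax_left in Hb by lra.
    split.
    + destruct (Rtotal_order x1 y) as [L|[L|L]]; auto. subst. lra. specialize (Hm y x1 Hy H1 L). lra.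
    + destruct (Rtotal_order y x2) as [L|[L|L]]; auto. subst. lra. specialize (Hm x2 y H2 Hy L). lra.
Qed.

Lemma img_opn S p : conv S -> opn S -> continuous_on_set S p -> strictly_monotone_on S p -> opn (Kset S p).
Proof.
  intros HS Ho Hc Hm s [x [Hx Ex]].
  destruct (Ho x Hx) as [e [He Hb]].
  assert (S1 : S (x - e / 2)) by (apply Hb; replace (x - e / 2 - x) with (- (e / 2)) by ring; rewrite Rabs_Ropp, Rabs_pos_eq; lra).
  assert (S2 : S (x + e / 2)) by (apply Hb; replace (x + e / 2 - x) with (e / 2) by ring; rewrite Rabs_pos_eq; lra).
  assert (N1 : p (x - e / 2) <> s) by (intro E; rewrite <- Ex in E; apply (sm_inj S p Hm) in E; auto; lra).
  assert (N2 : p (x + e / 2) <> s) by (intro E; rewrite <- Ex in E; apply (sm_inj S p Hm) in E; auto; lra).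
  exists (Rmin (Rabs (p (x - e / 2) - s)) (Rabs (p (x + e / 2) - s))). split.
  - apply Rmin_glb_lt; apply Rabs_pos_lt; lra.
  - intros t Ht.
    assert (T1 : Rabs (t - s) < Rabs (p (x - e / 2) - s)) by (eapply Rlt_le_trans; [exact Ht|apply Rmin_l]).
    assert (T2 : Rabs (t - s) < Rabs (p (x + e / 2) - s)) by (eapply Rlt_le_trans; [exact Ht|apply Rmin_r]).
    assert (K1 : Kset S p (p (x - e / 2))) by (exists (x - e / 2); auto).
    assert (K2 : Kset S p (p (x + e / 2))) by (exists (x + e / 2); auto).
    pose proof (img_conv S p HS Hc) as HK.
    destruct Hm as [Hm|Hm].
    + pose proof (Hm (x - e / 2) x S1 Hx ltac:(lra)) as A. pose proof (Hm x (x + e / 2) Hx S2 ltac:(lra)) as B.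
      rewrite Ex in A, B.
      rewrite (Rabs_left (p (x - e / 2) - s)) in T1 by lra. rewrite (Rabs_pos_eq (p (x + e / 2) - s)) in T2 by lra.
      apply Rabs_def2 in T1. apply Rabs_def2 in T2.
      apply (HK _ _ t K1 K2). split; lra.
    + pose proof (Hm (x - e / 2) x S1 Hx ltac:(lra)) as A. pose proof (Hm x (x + e / 2) Hx S2 ltac:(lra)) as B.
      rewrite Ex in A, B.
      rewrite (Rabs_pos_eq (p (x - e / 2) - s)) in T1 by lra. rewrite (Rabs_left (p (x + e / 2) - s)) in T2 by lra.
      apply Rabs_def2 in T1. apply Rabs_def2 in T2.
      apply (HK _ _ t K2 K1). split; lra.
Qed.

Lemma hinv_cont S p s : conv S -> opn S -> continuous_on_set S p -> strictly_monotone_on S p ->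
  Kset S p s -> continuous (inv_on S p) s.
Proof.
  intros HS Ho Hc Hm Ks. apply contR. intros eps Heps.
  destruct (inv_on_spec S p s Ks) as [Hx Ex]. set (x := inv_on S p s) in *.
  destruct (Ho x Hx) as [e [He Hb]].
  set (e' := Rmin eps e / 2).
  assert (He' : 0 < e' /\ e' < eps /\ e' < e).
  { unfold e'. pose proof (Rmin_l eps e). pose proof (Rmin_r eps e).
    assert (0 < Rmin eps e) by (apply Rmin_glb_lt; auto). lra. }
  assert (S1 : S (x - e')) by (apply Hb; replace (x - e' - x) with (- e') by ring; rewrite Rabs_Ropp, Rabs_pos_eq; lra).
  assert (S2 : S (x + e')) by (apply Hb; replace (x + e' - x) with e' by ring; rewrite Rabs_pos_eq; lra).
  pose proof (img_conv S p HS Hc) as HK.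
  assert (K1 : Kset S p (p (x - e'))) by (exists (x - e'); auto).
  assert (K2 : Kset S p (p (x + e'))) by (exists (x + e'); auto).
  assert (Hbt : exists d, 0 < d /\ forall t, Rabs (t - s) < d ->
     Rmin (p (x - e')) (p (x + e')) < t < Rmax (p (x - e')) (p (x + e'))).
  { destruct Hm as [Hm|Hm].
    + pose proof (Hm (x - e') x S1 Hx ltac:(lra)) as A. pose proof (Hm x (x + e') Hx S2 ltac:(lra)) as B.
      rewrite Ex in A, B. rewrite Rmin_left by lra. rewrite Rmax_right by lra.
      exists (Rmin (s - p (x - e')) (p (x + e') - s)). split. { apply Rmin_glb_lt; lra. }
      intros t Ht. apply Rabs_def2 in Ht. pose proof (Rmin_l (s - p (x - e')) (p (x + e') - s)).
      pose proof (Rmin_r (s - p (x - e')) (p (x + e') - s)). lra.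
    + pose proof (Hm (x - e') x S1 Hx ltac:(lra)) as A. pose proof (Hm x (x + e') Hx S2 ltac:(lra)) as B.
      rewrite Ex in A, B. rewrite Rmin_right by lra. rewrite Rmax_left by lra.
      exists (Rmin (p (x - e') - s) (s - p (x + e'))). split. { apply Rmin_glb_lt; lra. }
      intros t Ht. apply Rabs_def2 in Ht. pose proof (Rmin_l (p (x - e') - s) (s - p (x + e'))).
      pose proof (Rmin_r (p (x - e') - s) (s - p (x + e'))). lra. }
  destruct Hbt as [d [Hd Hbt]]. exists d. split; auto. intros t Ht.
  specialize (Hbt t Ht).
  assert (Kt : Kset S p t).
  { unfold Rmin, Rmax in Hbt. destruct (Rle_dec (p (x - e')) (p (x + e'))).
    - apply (HK _ _ t K1 K2). lra.
    - apply (HK _ _ t K2 K1). lra. }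
  destruct (inv_on_spec S p t Kt) as [Hy Ey].
  rewrite <- Ey in Hbt.
  pose proof (sm_between S p (x - e') (x + e') (inv_on S p t) Hm S1 S2 Hy ltac:(lra) Hbt) as Bt.
  apply Rabs_def1; lra.
Qed.

Lemma lam_indep (K : R -> Prop) (F G : R -> R) : conv K -> (forall s, K s -> 0 < F s) ->
  (forall s t, K s -> K t -> s <> t -> F s * G t - G s * F t <> 0) ->
  (forall c d, K (c - d) -> K (c + d) -> F c * (G (c - d) + G (c + d)) = G c * (F (c - d) + F (c + d))) ->
  forall s t d, K (s - d) -> K (s + d) -> K (t - d) -> K (t + d) ->
  (F (s - d) + F (s + d)) / F s = (F (t - d) + F (t + d)) / F t.
Proof.
  intros HK HF Hdet Hrel s t d K1 K2 K3 K4.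
  assert (Ks : K s). { destruct (Rle_dec 0 d); [apply (HK (s - d) (s + d))|apply (HK (s + d) (s - d))]; auto; lra. }
  assert (Kt : K t). { destruct (Rle_dec 0 d); [apply (HK (t - d) (t + d))|apply (HK (t + d) (t - d))]; auto; lra. }
  destruct (Req_dec s t) as [E|E]. { subst. reflexivity. }
  set (c := (s + t) / 2).
  assert (Kc : K c). { unfold c. destruct (Rle_dec s t); [apply (HK s t)|apply (HK t s)]; auto; lra. }
  pose proof (HF s Ks) as Fs. pose proof (HF t Kt) as Ft.
  set (ls := (F (s - d) + F (s + d)) / F s). set (lt := (F (t - d) + F (t + d)) / F t).
  assert (HsF : F (s - d) + F (s + d) = ls * F s) by (unfold ls; field; lra).
  assert (HtF : F (t - d) + F (t + d) = lt * F t) by (unfold lt; field; lra).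
  assert (HsG : G (s - d) + G (s + d) = ls * G s).
  { pose proof (Hrel s d K1 K2) as R. rewrite HsF in R. apply (Rmult_eq_reg_l (F s)); [|lra]. rewrite R. ring. }
  assert (HtG : G (t - d) + G (t + d) = lt * G t).
  { pose proof (Hrel t d K3 K4) as R. rewrite HtF in R. apply (Rmult_eq_reg_l (F t)); [|lra]. rewrite R. ring. }
  pose proof (Hrel c ((t - s) / 2 + d)) as R1.
  replace (c - ((t - s) / 2 + d)) with (s - d) in R1 by (unfold c; field).
  replace (c + ((t - s) / 2 + d)) with (t + d) in R1 by (unfold c; field).
  specialize (R1 K1 K4).
  pose proof (Hrel c ((t - s) / 2 - d)) as R3.
  replace (c - ((t - s) / 2 - d)) with (s + d) in R3 by (unfold c; field).
  replace (c + ((t - s) / 2 - d)) with (t - d) in R3 by (unfold c; field).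
  specialize (R3 K2 K3).
  pose proof (Hrel c ((t - s) / 2)) as R2.
  replace (c - ((t - s) / 2)) with s in R2 by (unfold c; field).
  replace (c + ((t - s) / 2)) with t in R2 by (unfold c; field).
  specialize (R2 Ks Kt).
  assert (eq1 : F c * ((G (s - d) + G (s + d)) + (G (t - d) + G (t + d))) =
                G c * ((F (s - d) + F (s + d)) + (F (t - d) + F (t + d)))).
  { transitivity (F c * (G (s - d) + G (t + d)) + F c * (G (s + d) + G (t - d))). ring.
    rewrite R1, R3. ring. }
  rewrite HsF, HtF, HsG, HtG in eq1.
  assert (Z : (ls - lt) * (F c * G s - G c * F s) = 0).
  { transitivity ((F c * (ls * G s + lt * G t) - G c * (ls * F s + lt * F t))
                  - lt * (F c * (G s + G t) - G c * (F s + F t))). ring.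
    rewrite eq1, R2. ring. }
  apply Rmult_integral in Z. destruct Z as [Z|Z]. lra.
  exfalso. apply (Hdet c s Kc Ks). unfold c. lra. exact Z.
Qed.

Lemma F_cont (K : R -> Prop) (F G U : R -> R) : conv K -> opn K -> (forall s, K s -> 0 < F s) ->
  (forall s, K s -> G s = U s * F s) -> (forall s, K s -> continuous U s) -> injS K U ->
  (forall c d, K (c - d) -> K (c + d) -> F c * (G (c - d) + G (c + d)) = G c * (F (c - d) + F (c + d))) ->
  forall p, K p -> continuous F p.
Proof.
  intros HK Ho HF HG HU Hi Hrel p Kp.
  destruct (opn_two K p Ho Kp) as [t0 [Kt0 Nt0]].
  assert (Hm : forall t, K t -> K ((t + t0) / 2)).
  { intros t Kt. destruct (Rle_dec t t0); [apply (HK t t0)|apply (HK t0 t)]; auto; lra. }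
  assert (Hexp : forall t, K t -> t <> t0 ->
     F t0 * (U ((t + t0) / 2) - U t0) * / (U t - U ((t + t0) / 2)) = F t).
  { intros t Kt Nt.
    assert (NU : U t - U ((t + t0) / 2) <> 0).
    { intro Z. apply Nt. assert (t = (t + t0) / 2). { apply Hi; auto. lra. } lra. }
    pose proof (Hrel ((t + t0) / 2) ((t - t0) / 2)) as R.
    replace ((t + t0) / 2 - (t - t0) / 2) with t0 in R by field.
    replace ((t + t0) / 2 + (t - t0) / 2) with t in R by field.
    specialize (R Kt0 Kt). rewrite !HG in R; auto.
    pose proof (HF _ (Hm t Kt)) as Fm.
    apply (Rmult_eq_reg_l (U t - U ((t + t0) / 2))); auto.
    apply (Rmult_eq_reg_l (F ((t + t0) / 2))); [|lra].
    field_simplify; auto. 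
    transitivity (F ((t + t0) / 2) * F t0 * U ((t + t0) / 2) - F ((t + t0) / 2) * F t0 * U t0).
    ring. nra. }
  apply (continuous_ext_loc _ (fun t => F t0 * (U ((t + t0) / 2) - U t0) * / (U t - U ((t + t0) / 2)))).
  - destruct (Ho p Kp) as [e [He Hb]]. apply locR.
    exists (Rmin e (Rabs (p - t0))). split.
    + apply Rmin_glb_lt; auto. apply Rabs_pos_lt. lra.
    + intros y Hy. apply Hexp.
      * apply Hb. eapply Rlt_le_trans; [exact Hy|apply Rmin_l].
      * intro E. subst y. pose proof (Rmin_r e (Rabs (t0 - t0))). rewrite Rminus_diag, Rabs_R0 in H.
        assert (Rabs (t0 - p) < Rabs (p - t0)) by (eapply Rlt_le_trans; [exact Hy|apply Rmin_r]).
        rewrite Rabs_minus_sym in H0. lra.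
  - assert (Cm : continuous (fun t => U ((t + t0) / 2)) p).
    { apply (continuous_comp (fun t => (t + t0) / 2) U).
      - apply (derive_cont _ _ (/ 2)). auto_derive; auto. field.
      - apply HU. apply Hm. auto. }
    apply cont_mult_R.
    + apply cont_mult_R.
      * apply continuous_const.
      * apply cont_minus_R; auto. apply continuous_const.
    + apply continuous_Rinv_comp.
      * apply cont_minus_R; auto.
      * intro Z. apply Nt0. assert (p = (p + t0) / 2). { apply Hi; auto. lra. } lra.
Qed.

Lemma ball_opn t r : opn (fun y => Rabs (y - t) < r).
Proof.
  intros x Hx. exists (r - Rabs (x - t)). split; [lra|]. intros y Hy.
  replace (y - t) with ((y - x) + (x - t)) by ring. eapply Rle_lt_trans; [apply Rabs_triang|]. lra.
Qed.

Lemma i_ii S f g : conv S -> opn S -> (exists x0, S x0) -> B0 S f g -> stmt_i S f g -> stmt_ii S f g.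
Proof.
  intros HS Ho [x0 Hx0] [Hf [Hqm Hqc]] [h [Hhc [Hhm Hst]]].
  set (K := Kset S h).
  assert (HK : conv K) by (apply img_conv; auto).
  assert (HKo : opn K) by (apply img_opn; auto).
  set (hi := inv_on S h).
  assert (Hhi : forall s, K s -> S (hi s) /\ h (hi s) = s) by (intros s Ks; apply inv_on_spec; auto).
  pose proof (sm_inj S h Hhm) as Hhinj. pose proof (sm_inj S _ Hqm) as Hqinj.
  set (F := fun s => f (hi s)). set (G := fun s => g (hi s)). set (U := fun s => quot f g (hi s)).
  assert (FK : forall s, K s -> 0 < F s) by (intros s Ks; apply Hf; apply Hhi; auto).
  assert (GK : forall s, K s -> G s = U s * F s).
  { intros s Ks. unfold G, U, F, quot. field. specialize (FK s Ks). unfold F in FK. lra. }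
  assert (UC : forall s, K s -> continuous U s).
  { intros s Ks. apply (continuous_comp hi (quot f g) s).
    - apply hinv_cont; auto.
    - apply Hqc. apply Hhi. auto. }
  assert (Ui : injS K U).
  { intros s t Ks Kt E. destruct (Hhi s Ks) as [S1 E1]. destruct (Hhi t Kt) as [S2 E2].
    rewrite <- E1, <- E2. f_equal. apply Hqinj; auto. }
  assert (Rel : forall c d, K (c - d) -> K (c + d) -> F c * (G (c - d) + G (c + d)) = G c * (F (c - d) + F (c + d))).
  { intros c d K1 K2.
    assert (Kc : K c). { destruct (Rle_dec 0 d); [apply (HK (c - d) (c + d))|apply (HK (c + d) (c - d))]; auto; lra. }
    destruct (Hhi _ K1) as [Sx Ex]. destruct (Hhi _ K2) as [Sy Ey]. destruct (Hhi _ Kc) as [Sz Ez].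
    set (x := hi (c - d)) in *. set (y := hi (c + d)) in *. set (z := hi c) in *.
    pose proof (Hst x y Sx Sy) as St.
    replace ((h x + h y) / 2) with c in St by (rewrite Ex, Ey; field). fold hi in St. fold z in St.
    pose proof (Hf x Sx) as fx. pose proof (Hf y Sy) as fy. pose proof (Hf z Sz) as fz.
    assert (Kr : Kset S (quot f g) ((g x + g y) / (f x + f y))).
    { assert (Er : (g x + g y) / (f x + f y) = (f x * quot f g x + f y * quot f g y) / (f x + f y)).
      { unfold quot. field. lra. }
      rewrite Er. pose proof (img_conv S _ HS Hqc) as HJ.
      destruct (wmean (f x) (f y) (quot f g x) (quot f g y) fx fy) as [W|W].
      - apply (HJ (quot f g x) (quot f g y)); auto; [exists x|exists y]; auto.
      - apply (HJ (quot f g y) (quot f g x)); auto; [exists y|exists x]; auto. }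
    destruct (inv_on_spec S _ _ Kr) as [_ Eq]. rewrite St in Eq. fold z in Eq.
    unfold F, G. fold x y z. unfold quot in Eq.
    apply (Rmult_eq_reg_r (/ (f z * (f x + f y)))).
    - transitivity ((g x + g y) / (f x + f y)). field. lra. rewrite <- Eq. field. lra.
    - apply Rinv_neq_0_compat. apply Rmult_integral_contrapositive_currified; lra. }
  assert (Det : forall s t, K s -> K t -> s <> t -> F s * G t - G s * F t <> 0).
  { intros s t Ks Kt N. rewrite (GK s Ks), (GK t Kt).
    replace (F s * (U t * F t) - U s * F s * F t) with (F s * F t * (U t - U s)) by ring.
    pose proof (FK s Ks). pose proof (FK t Kt).
    apply Rmult_integral_contrapositive_currified.
    - apply Rmult_integral_contrapositive_currified; lra.
    - intro Z. apply N. apply Ui; auto. lra. }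
  assert (Fc : forall s, K s -> continuous F s) by (apply (F_cont K F G U); auto).
  assert (Gc : forall s, K s -> continuous G s).
  { intros s Ks. apply (continuous_ext_loc _ (fun t => U t * F t)).
    - destruct (HKo s Ks) as [e [He Hb]]. apply locR. exists e. split; auto. intros y Hy.
      symmetry. apply GK. apply Hb. auto.
    - apply cont_mult_R; auto. }
  pose proof (lam_indep K F G HK FK Det Rel) as Lam.
  assert (Loc : forall s0, K s0 -> exists r mu0, 0 < r /\ forall t, Rabs (t - s0) < r ->
     K t /\ is_derive F t (Derive F t) /\ is_derive (Derive F) t (mu0 * F t) /\
     is_derive G t (Derive G t) /\ is_derive (Derive G) t (mu0 * G t)).
  { intros s0 Ks0. destruct (HKo s0 Ks0) as [rho [Hrho Hb]].
    set (L := fun d => (F (s0 - d) + F (s0 + d)) / F s0).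
    pose proof (FK s0 Ks0) as F0.
    assert (LC : forall d, Rabs d < rho -> continuous L d).
    { intros d Hd. unfold L.
      assert (K1 : K (s0 - d)) by (apply Hb; replace (s0 - d - s0) with (- d) by ring; rewrite Rabs_Ropp; auto).
      assert (K2 : K (s0 + d)) by (apply Hb; replace (s0 + d - s0) with d by ring; auto).
      apply cont_mult_R; [|apply continuous_const].
      apply (@continuous_plus R_UniformSpace R_AbsRing R_NormedModule (fun d => F (s0 - d)) (fun d => F (s0 + d))).
      - apply (continuous_comp (fun d => s0 - d) F).
        + apply (derive_cont _ _ (-1)). auto_derive; auto.
        + apply Fc; auto.
      - apply (continuous_comp (fun d => s0 + d) F).
        + apply (derive_cont _ _ 1). auto_derive; auto.
        + apply Fc; auto. }
    assert (L0 : L 0 = 2) by (unfold L; replace (s0 - 0) with s0 by ring; replace (s0 + 0) with s0 by ring; field; lra).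
    destruct (proj1 (contR L 0) (LC 0 ltac:(rewrite Rabs_R0; lra)) 1 ltac:(lra)) as [eps [Heps Hl]].
    set (de := Rmin (eps / 2) (rho / 4)).
    assert (Hde : 0 < de /\ de <= eps / 2 /\ de <= rho / 4).
    { unfold de. split; [apply Rmin_glb_lt; lra|split; [apply Rmin_l|apply Rmin_r]]. }
    assert (HL : forall d, Rabs d <= de -> continuous L d /\ 0 < L d).
    { intros d Hd. split. apply LC. lra.
      assert (Rabs (d - 0) < eps) by (rewrite Rminus_0_r; lra). specialize (Hl d H).
      rewrite L0 in Hl. apply Rabs_def2 in Hl. lra. }
    assert (RF : forall t d, K (t - d) -> K (t + d) -> K (s0 - d) -> K (s0 + d) -> F (t - d) + F (t + d) = L d * F t).
    { intros t d K1 K2 K3 K4. unfold L. rewrite <- (Lam t s0 d K1 K2 K3 K4). field.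
      assert (Kt : K t). { destruct (Rle_dec 0 d); [apply (HK (t - d) (t + d))|apply (HK (t + d) (t - d))]; auto; lra. }
      specialize (FK t Kt). lra. }
    assert (RG : forall t d, K (t - d) -> K (t + d) -> K (s0 - d) -> K (s0 + d) -> G (t - d) + G (t + d) = L d * G t).
    { intros t d K1 K2 K3 K4.
      assert (Kt : K t). { destruct (Rle_dec 0 d); [apply (HK (t - d) (t + d))|apply (HK (t + d) (t - d))]; auto; lra. }
      pose proof (FK t Kt) as Ft. pose proof (Rel t d K1 K2) as R. rewrite (RF t d K1 K2 K3 K4) in R.
      apply (Rmult_eq_reg_l (F t)); [|lra]. rewrite R. ring. }
    pose proof (smooth_loc K F L s0 rho de Hrho Hb ltac:(lra) ltac:(lra) Fc HL RF) as SF.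
    pose proof (smooth_loc K G L s0 rho de Hrho Hb ltac:(lra) ltac:(lra) Gc HL RG) as SG.
    exists (rho / 4), (4 * (L (2 * de) - 2) / (RInt L (- de) de) ^ 2). split; [lra|].
    intros t Ht. destruct (SF t Ht) as [A1 A2]. destruct (SG t Ht) as [B1 B2].
    split; auto. apply Hb. lra. }
  destruct (Hhi (h x0) (ex_intro _ x0 (conj Hx0 eq_refl))) as [_ _].
  assert (Kt1 : K (h x0)) by (exists x0; auto).
  set (t1 := h x0) in *.
  set (Mu := fun t => Derive (Derive F) t / F t).
  assert (ZMu : forall t, K t -> is_derive Mu t 0).
  { intros t Kt. destruct (Loc t Kt) as [r [mu0 [Hr Hl]]].
    apply (loc_const (fun y => Rabs (y - t) < r) Mu mu0 t (ball_opn t r)).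
    - rewrite Rminus_diag, Rabs_R0. auto.
    - intros y Hy. destruct (Hl y Hy) as [Ky [_ [A _]]]. unfold Mu. rewrite (is_derive_unique _ _ _ A).
      field. specialize (FK y Ky). lra. }
  set (mu := Mu t1).
  assert (HD : D2 K F G (Derive F) (Derive G) (fun t => mu * F t) (fun t => mu * G t)).
  { intros t Kt. destruct (Loc t Kt) as [r [mu0 [Hr Hl]]].
    destruct (Hl t ltac:(rewrite Rminus_diag, Rabs_R0; lra)) as [_ [A1 [A2 [A3 A4]]]].
    assert (Em : mu0 = mu).
    { unfold mu. rewrite <- (const_S K Mu t t1 HK ZMu Kt Kt1). unfold Mu.
      rewrite (is_derive_unique _ _ _ A2). field. specialize (FK t Kt). lra. }
    rewrite Em in A2, A4. repeat (split; [assumption|]). assumption. }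
  set (w := fun t => Derive F t * G t - F t * Derive G t).
  assert (Zw : forall t, K t -> is_derive w t 0).
  { intros t Kt. destruct (HD t Kt) as [DF [DG [DF1 DG1]]]. cbv beta in DF1, DG1.
    unfold w. auto_derive.
    - repeat split; try (eexists; eassumption).
    - rdv DF; rdv DG; rdv DF1; rdv DG1. ring. }
  assert (Wc : forall t, K t -> w t = w t1) by (intros t Kt; apply (const_S K w t t1 HK Zw Kt Kt1)).
  assert (W0 : w t1 <> 0).
  { intro Z. destruct (opn_two K t1 HKo Kt1) as [t2 [Kt2 N2]].
    assert (ZQ : forall t, K t -> is_derive (fun s => G s / F s) t 0).
    { intros t Kt. destruct (HD t Kt) as [DF [DG [DF1 DG1]]]. pose proof (FK t Kt) as Ft.
      pose proof (Wc t Kt) as Wt. rewrite Z in Wt. unfold w in Wt.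
      apply (is_derive_eq _ _ _ _ (is_derive_div _ _ _ _ _ DG DF ltac:(lra))).
      replace (Derive G t * F t - G t * Derive F t) with (- (Derive F t * G t - F t * Derive G t)) by ring.
      rewrite Wt. toR. field. lra. }
    pose proof (const_S K _ t2 t1 HK ZQ Kt2 Kt1) as E. cbv beta in E.
    rewrite (GK t2 Kt2), (GK t1 Kt1) in E.
    pose proof (FK t2 Kt2). pose proof (FK t1 Kt1).
    assert (EU : U t2 = U t1).
    { replace (U t2) with (U t2 * F t2 / F t2) by (field; lra). rewrite E. field. lra. }
    apply N2. apply (Ui t2 t1 Kt2 Kt1 EU). }
  destruct (gen_iv_ii K F G (Derive F) (Derive G) (fun t => mu * F t) (fun t => mu * G t) (- mu / (w t1) ^ 2)
      HK HKo (ex_intro _ t1 Kt1) HD) as [al [be [ga Hq]]].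
  - intros t Kt. fold (w t). rewrite (Wc t Kt). auto.
  - intros t Kt. fold (w t). rewrite (Wc t Kt).
    transitivity (- mu * w t). unfold w. ring. rewrite (Wc t Kt). field. auto.
  - exists al, be, ga. intros x Hx.
    assert (Kx : K (h x)) by (exists x; auto).
    specialize (Hq (h x) Kx). unfold F, G, hi in Hq. rewrite (inv_on_eq S h x Hhinj Hx) in Hq. exact Hq.
Qed.

Theorem theorem3p3 (a b : Rbar) (f g : R -> R) :
  Rbar_lt a b ->
  B0 (oint a b) f g ->
  (stmt_i (oint a b) f g <-> stmt_ii (oint a b) f g) /\
  (Bn 1 (oint a b) f g ->
     (stmt_i (oint a b) f g <-> stmt_ii (oint a b) f g) /\
     (stmt_i (oint a b) f g <-> stmt_iii (oint a b) f g)) /\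
  (Bn 2 (oint a b) f g ->
     (stmt_i (oint a b) f g <-> stmt_ii (oint a b) f g) /\
     (stmt_i (oint a b) f g <-> stmt_iii (oint a b) f g) /\
     (stmt_i (oint a b) f g <-> stmt_iv (oint a b) f g) /\
     (stmt_i (oint a b) f g <-> stmt_v (oint a b) f g)).
Proof.
  intros Hab HB0.
  pose proof (oint_conv a b) as Hc. pose proof (oint_opn a b) as Ho. pose proof (oint_ne a b Hab) as Hne.
  assert (E12 : stmt_i (oint a b) f g <-> stmt_ii (oint a b) f g).
  { split; [apply i_ii|apply ii_to_i]; auto. }
  assert (E13 : Bn 1 (oint a b) f g -> (stmt_i (oint a b) f g <-> stmt_iii (oint a b) f g)).
  { intro HB. split.
    - intro H. apply ii_to_iii; auto. apply E12. exact H.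
    - apply iii_to_i; auto. }
  split; [exact E12|split].
  - intro HB. split; auto.
  - intro HB. pose proof (bn2_bn1 _ _ _ HB) as HB1. split; [|split; [|split]]; auto.
    + split.
      * intro H. apply ii_iv; auto. apply E12. exact H.
      * intro H. apply E12. apply iv_ii; auto.
    + split.
      * intro H. apply iv_v; auto. apply ii_iv; auto. apply E12. exact H.
      * intro H. apply E12. apply iv_ii; auto. apply v_iv; auto.
Qed.
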